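(* For every $k\ge0$ the sequence $\mathcal{P}_k(\delta_1)$ belongs to $\ell^1(\mathbb{N}^0,\frac1{4^n})$, $\|\mathcal{P}_0(\delta_1)\|_{1,\frac1{4^n}}=1$, and $$\|\mathcal{P}_k(\delta_1)\|_{1,\frac1{4^n}}=\mathcal{P}_k\!\left(-\tfrac14\right)=\frac{\alpha_k}{4^{k-1}},\qquad k\ge1,$$ where $\alpha_1=1$, $\alpha_2=5$ and $\alpha_k=4(\alpha_{k-1}+\alpha_{k-2})$ for $k\ge3$.
   Context: The Catalan polynomials $(\mathcal{P}_k)_{k\ge0}$ are defined by $\mathcal{P}_0(z)=\mathcal{P}_1(z)=1$ and $\mathcal{P}_{k+2}(z)=\mathcal{P}_{k+1}(z)-z\mathcal{P}_k(z)$ for $k\ge0$; equivalently $\mathcal{P}_k(z)=\frac{(1+\sqrt{1-4z})^{k+1}-(1-\sqrt{1-4z})^{k+1}}{2^{k+1}\sqrt{1-4z}}$. $\ell^1(\mathbb{N}^0,\frac1{4^n})$ is the space of complex sequences $a=(a(n))_{n\ge0}$ with norm $\|a\|_{1,\frac1{4^n}}=\sum_{n\ge0}|a(n)|/4^n<\infty$. $\delta_j$ denotes the sequence with $\delta_j(n)=1$ if $n=j$ and $0$ otherwise; for a polynomial $P(z)=\sum_{j=0}^m p_jz^j$, $P(\delta_1)=\sum_{j=0}^m p_j\delta_j$ (the sequence of its coefficients). *)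

(* Defs.v *)
From HB Require Import structures.
From mathcomp Require Import all_boot all_order all_algebra.
From mathcomp Require Import all_classical all_reals all_analysis.
Set Implicit Arguments. Unset Strict Implicit. Unset Printing Implicit Defensive.
Import Order.TTheory GRing.Theory Num.Theory.
Import numFieldNormedType.Exports.
Local Open Scope ring_scope.

Fixpoint catalan_pair (R : comNzRingType) (k : nat) : {poly R} * {poly R} :=
  match k with
  | 0%N => (1, 1)
  | k'.+1 => let p := catalan_pair R k' in (p.2, p.2 - 'X * p.1)
  end.

Definition catalan_poly (R : comNzRingType) (k : nat) : {poly R} :=
  (catalan_pair R k).1.

(* P(delta_1): the coefficient sequence of the polynomial P *)
Definition poly_seq (R : comNzRingType) (p : {poly R}) : nat -> R :=
  fun n => p`_n.

Definition w4 (R : realType) (a : nat -> R) : nat -> R :=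
  fun n => `|a n| / 4 ^+ n.

Definition in_l1_4 (R : realType) (a : nat -> R) : Prop :=
  cvgn (series (w4 a)).

Definition norm_l1_4 (R : realType) (a : nat -> R) : R :=
  limn (series (w4 a)).

(* alpha_1 = 1, alpha_2 = 5, alpha_k = 4 (alpha_{k-1} + alpha_{k-2}) for k >= 3;
   alpha_0 is unused (set to 0). *)
Fixpoint alpha (k : nat) : nat :=
  match k with
  | 0%N => 0%N
  | 1%N => 1%N
  | 2%N => 5%N
  | (S (S m as n)) => (4 * (alpha n + alpha m))%N
  end.

(* Main.v *)
Require Import Defs.
From HB Require Import structures.
From mathcomp Require Import all_boot all_order all_algebra.
From mathcomp Require Import all_classical all_reals all_analysis.
From mathcomp Require Import ring.
Import Order.TTheory GRing.Theory Num.Theory.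
Import numFieldNormedType.Exports.
Local Open Scope ring_scope.

Lemma cat_rec (R : comNzRingType) k :
  catalan_poly R k.+2 = catalan_poly R k.+1 - 'X * catalan_poly R k.
Proof. by []. Qed.

Lemma cat_sign (R : realType) k :
  (forall j, 0 <= (-1) ^+ j * (catalan_pair R k).1`_j) /\
  (forall j, 0 <= (-1) ^+ j * (catalan_pair R k).2`_j).
Proof.
elim: k => [|k [H1 H2]] /=.
  by split=> j; rewrite coefC; case: j => [|j] /=; rewrite ?mulr0 // expr0 mul1r.
split => // j; rewrite coefB coefXM; case: j => [|j] /=.
  by rewrite subr0; apply: H2.
have A := H2 j.+1; have B := H1 j; rewrite exprS in A *.
have -> : -1 * (-1) ^+ j * ((catalan_pair R k).2`_j.+1 - (catalan_pair R k).1`_j)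
   = -1 * (-1) ^+ j * (catalan_pair R k).2`_j.+1 + (-1) ^+ j * (catalan_pair R k).1`_j
  by ring.
exact: addr_ge0.
Qed.

Lemma cat_series (R : realType) k :
  (series (w4 (poly_seq (catalan_poly R k))) @ \oo --> (catalan_poly R k).[- 4^-1])%classic.
Proof.
apply: cvg_near_cst; near=> n.
have hn : (size (catalan_poly R k) <= n)%N by near: n; exact: nbhs_infty_ge.
rewrite (horner_coef_wide _ hn) /series /= big_mkord.
apply: eq_bigr => i _; rewrite /w4 /poly_seq /catalan_poly.
have S := (cat_sign R k).1 i.
have -> : `|(catalan_pair R k).1`_i| = (-1) ^+ i * (catalan_pair R k).1`_i.
  by rewrite -(ger0_norm S) normrM normrX normrN1 expr1n mul1r.
rewrite [in RHS]exprNn exprVn; ring.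
Unshelve. all: by end_near.
Qed.

Lemma cat_eval (R : realType) k :
  (catalan_poly R k.+1).[- 4^-1] = (alpha k.+1)%:R / 4 ^+ k /\
  (catalan_poly R k.+2).[- 4^-1] = (alpha k.+2)%:R / 4 ^+ k.+1.
Proof.
have h4 : (4 : R) != 0 by rewrite pnatr_eq0.
elim: k => [|k [IH1 IH2]].
  rewrite cat_rec /catalan_poly /= !hornerE /=; split; first by rewrite expr0 ?divr1; field.
  rewrite expr1; field => //.
split => //.
rewrite (cat_rec R k.+1) hornerD hornerN. rewrite hornerM hornerX IH1 IH2.
have -> : alpha k.+3 = (4 * (alpha k.+2 + alpha k.+1))%N by [].
rewrite natrM natrD !exprS; field.
by rewrite expf_neq0.
Qed.

Theorem lemma3p5 (R : realType) :
  (forall k : nat, in_l1_4 (poly_seq (catalan_poly R k))) /\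
  norm_l1_4 (poly_seq (catalan_poly R 0)) = 1 /\
  (forall k : nat, (1 <= k)%N ->
     norm_l1_4 (poly_seq (catalan_poly R k)) = (catalan_poly R k).[- 4^-1] /\
     (catalan_poly R k).[- 4^-1] = (alpha k)%:R / 4 ^+ (k - 1)).
Proof.
have L k : norm_l1_4 (poly_seq (catalan_poly R k)) = (catalan_poly R k).[- 4^-1].
  exact: cvg_lim (cat_series R k).
split; first by move=> k; apply/cvg_ex; eexists; exact: cat_series.
split; first by rewrite L /catalan_poly /= hornerC.
case=> // k _; split; first exact: L.
by rewrite subn1 /=; case: (cat_eval R k).
Qed.
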